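(* Let $U=\{1,\dots,N\}$ be a finite population with auxiliary vectors $\bm{x}_i\in\mathbb{R}^p$, $i\in U$. Let $k$ be the reproducing kernel associated with the energy distance, so that for any probability measures $P,Q$ on $\mathbb{R}^p$ with finite first moment, \[ \mathcal{E}(P,Q)=\mathrm{MMD}_k^2(P,Q)=\|\mu_P-\mu_Q\|_{\mathcal{H}_k}^2, \] where $\mathcal{H}_k$ is the reproducing kernel Hilbert space of $k$ and $\mu_P=E_{\bm{X}\sim P}[k(\bm{X},\cdot)]\in\mathcal{H}_k$ is the kernel mean embedding. Let $f\in\mathcal{H}_k$, define $y_i=f(\bm{x}_i)$ for $i\in U$, and let \[ \hat Y=\frac{N}{n}\sum_{i\in S} y_i,\qquad Y=\sum_{i\in U}y_i. \] Then for any sampling design producing a random sample $S\subset U$ of fixed size $n$, \[ E\big[(\hat Y-Y)^2\big]\le N^2\,\|f\|_{\mathcal{H}_k}^2\,E\big[\mathcal{E}(F_S,F_U)\big], \] where the expectations are with respect to the sampling design.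
   Context: For a subset $s\subset U$ of size $n$, $F_s=\frac1n\sum_{i\in s}\delta_{\bm{x}_i}$ and $F_U=\frac1N\sum_{i\in U}\delta_{\bm{x}_i}$ are the empirical distributions of the auxiliary vectors in $s$ and in $U$, where $\delta_{\bm{x}}$ is the Dirac measure at $\bm{x}$. The energy distance between distributions $P$ and $Q$ is $\mathcal{E}(P,Q)=2E\|\bm{X}-\bm{Z}\|-E\|\bm{X}-\bm{X}'\|-E\|\bm{Z}-\bm{Z}'\|$, where $\bm{X},\bm{X}'\sim P$ and $\bm{Z},\bm{Z}'\sim Q$ are independent and $\|\cdot\|$ is the Euclidean norm. *)

(* Defs.v *)
From HB Require Import structures.
From mathcomp Require Import all_boot all_order all_algebra.
From mathcomp Require Import all_classical all_reals all_analysis.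
Set Implicit Arguments. Unset Strict Implicit. Unset Printing Implicit Defensive.
Import Order.TTheory GRing.Theory Num.Theory.
Local Open Scope ring_scope.
Local Open Scope classical_set_scope.
Import numFieldNormedType.Exports.

Section Energy.
Variables (R : realType) (p : nat).
Notation pt := 'rV[R]_p.

Definition enorm (v : pt) : R := Num.sqrt (\sum_(i < p) (v 0 i) ^+ 2).

(* Finitely supported probability distributions on R^p, given as a list of
   (weight, atom) pairs: the measure sum_c c.1 * delta_{c.2}. *)
Definition fdist := seq (R * pt).

Definition Eabs (P Q : fdist) : R :=
  \sum_(a <- P) \sum_(b <- Q) a.1 * b.1 * enorm (a.2 - b.2).
Definition energy_dist (P Q : fdist) : R :=
  2 * Eabs P Q - Eabs P P - Eabs Q Q.

Definition empirical (N : nat) (x : 'I_N -> pt) (s : {set 'I_N}) : fdist :=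
  [seq (#|s|%:R^-1, x i) | i <- enum s].

(* The (distance-induced) reproducing kernel of the energy distance,
   k(x,y) = |x| + |y| - |x-y|, for which MMD_k^2 = energy distance. *)
Definition kE (u v : pt) : R := enorm u + enorm v - enorm (u - v).

(* Pre-RKHS H_0 = span { k(z,.) } : an element is a finite combination
   sum_c c.1 * k(c.2, .). *)
Definition pre := seq (R * pt).
Definition pre_eval (h : pre) (y : pt) : R := \sum_(c <- h) c.1 * kE c.2 y.
Definition pre_ip (h g : pre) : R :=
  \sum_(c <- h) \sum_(d <- g) c.1 * d.1 * kE c.2 d.2.
Definition pre_sub (h g : pre) : pre := h ++ [seq (- d.1, d.2) | d <- g].

(* Moore-Aronszajn completion: f belongs to the RKHS H_k with norm r iff f is
   the pointwise limit of an H_0-Cauchy sequence u whose H_0-norms tend to r. *)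
Definition rkhs_norm_is (f : pt -> R) (r : R) : Prop :=
  exists u : nat -> pre,
    (forall e : R, 0 < e -> exists M : nat, forall m k : nat,
        (M <= m)%N -> (M <= k)%N -> pre_ip (pre_sub (u m) (u k)) (pre_sub (u m) (u k)) < e)
    /\ (forall y : pt, (fun m => pre_eval (u m) y) @ \oo --> f y)
    /\ ((fun m => Num.sqrt (pre_ip (u m) (u m))) @ \oo --> r).

End Energy.

(* Main.v *)
Require Import Defs.
From HB Require Import structures.
From mathcomp Require Import all_boot all_order all_algebra.
From mathcomp Require Import all_classical all_reals all_analysis.
From mathcomp Require Import ring lra.
Import Order.TTheory GRing.Theory Num.Theory.
Local Open Scope ring_scope.

Import numFieldNormedType.Exports.
Section Aux.
Local Open Scope classical_set_scope.
Variables (R : realType) (p : nat).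
Notation pt := 'rV[R]_p.
Notation J := (R * pt)%type.

Definition gram (K : J -> J -> R) :=
  exists fs : seq (J -> R), forall j k, K j k = \sum_(f <- fs) f j * f k.

Lemma gram_ext K K' : (forall j k, K j k = K' j k) -> gram K -> gram K'.
Proof. by move=> E [fs H]; exists fs => j k; rewrite -E. Qed.

Lemma gram_psd K (h : seq J) : gram K ->
  0 <= \sum_(c <- h) \sum_(d <- h) c.1 * d.1 * K c d.
Proof.
case=> fs HK.
have -> : \sum_(c <- h) \sum_(d <- h) c.1 * d.1 * K c d =
          \sum_(f <- fs) (\sum_(c <- h) c.1 * f c) ^+ 2.
  under eq_bigr => c _ do under eq_bigr => d _ do rewrite HK mulr_sumr.
  under eq_bigr => c _ do rewrite exchange_big.
  rewrite exchange_big; apply: eq_bigr => f _.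
  rewrite expr2 big_distrlr; apply: eq_bigr => c _; apply: eq_bigr => d _.
  by rewrite /=; ring.
by apply: sumr_ge0 => f _; apply: sqr_ge0.
Qed.

Lemma gram_add K1 K2 : gram K1 -> gram K2 -> gram (fun j k => K1 j k + K2 j k).
Proof.
case=> f1 H1 [f2 H2]; exists (f1 ++ f2) => j k.
by rewrite big_cat H1 H2.
Qed.

Lemma gram_scale c K : 0 <= c -> gram K -> gram (fun j k => c * K j k).
Proof.
move=> c0 [fs H]; exists [seq (fun j => Num.sqrt c * f j) | f <- fs] => j k.
rewrite big_map H mulr_sumr; apply: eq_bigr => f _.
have := sqr_sqrtr c0; rewrite expr2 => E.
by rewrite mulrACA E.
Qed.

Lemma gram_mul K1 K2 : gram K1 -> gram K2 -> gram (fun j k => K1 j k * K2 j k).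
Proof.
case=> f1 H1 [f2 H2].
exists [seq (fun j => f j * g j) | f <- f1, g <- f2] => j k.
rewrite big_allpairs_dep H1 H2 big_distrlr; apply: eq_bigr => f _.
by apply: eq_bigr => g _; rewrite /=; ring.
Qed.

Lemma gram_feat (f : J -> R) : gram (fun j k => f j * f k).
Proof. by exists [:: f] => j k; rewrite big_seq1. Qed.

Lemma gram_sumI n (F : 'I_n -> J -> R) :
  gram (fun j k => \sum_(i < n) F i j * F i k).
Proof. by exists [seq F i | i <- index_enum 'I_n] => j k; rewrite big_map. Qed.

Fixpoint qn (n : nat) (x : R) : R :=
  if n is n'.+1 then (x + qn n' x ^+ 2) / 2 else 0.

Lemma gram_qn n K : gram K -> gram (fun j k => qn n (K j k)).
Proof.
move=> HK; elim: n => [|n IH] /=.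
  by exists [::] => j k; rewrite big_nil.
apply: (@gram_ext (fun j k => 2^-1 * (K j k + qn n (K j k) * qn n (K j k)))).
  by move=> j k; rewrite expr2 mulrC.
apply: gram_scale; first by rewrite invr_ge0.
by apply: gram_add => //; apply: gram_mul.
Qed.

Lemma qn_err n (x : R) : 0 <= x <= 1 ->
  0 <= qn n x <= 1 - Num.sqrt (1 - x) /\
  (1 - Num.sqrt (1 - x)) - qn n x <= 2 / (n + 2)%:R.
Proof.
case/andP=> x0 x1.
set r := Num.sqrt (1 - x).
have r0 : 0 <= r by apply: sqrtr_ge0.
have r2 : r ^+ 2 = 1 - x by rewrite sqr_sqrtr // subr_ge0.
have r1 : r <= 1 by nra.
elim: n => [|n [/andP[q0 q1] IH]] /=.
  split; first by apply/andP; split; [exact: lexx | lra].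
  rewrite subr0 add0n divff //; lra.
set q := qn n x in q0 q1 IH *.
set k : R := (n + 2)%:R.
have k0 : 0 < k by rewrite ltr0n addn2.
have k1 : 2 <= k by rewrite /k ler_nat addn2.
have kS : (n.+1 + 2)%:R = k + 1 by rewrite /k addSn -addn1 natrD addnC.
rewrite kS.
set m := 2 / k.
have mk : m * k = 2 by rewrite /m mulfVK // gt_eqF.
have m0 : 0 <= m by rewrite /m divr_ge0 // ltW.
have m1 : m <= 1 by rewrite /m ler_pdivrMr // mul1r.
split.
  apply/andP; split; first by rewrite divr_ge0 //; nra.
  rewrite ler_pdivrMr //; nra.
have e2 : (1 - r - (x + q ^+ 2) / 2) * 2 <= m * (2 - m).
  have -> : (1 - r - (x + q ^+ 2) / 2) * 2 = (1 - r - q) * ((1 - r) + q).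
    have -> : x = 1 - r ^+ 2 by rewrite r2; ring.
    by field.
  set e := 1 - r - q.
  have e0 : 0 <= e by rewrite /e subr_ge0.
  have em : e <= m by [].
  have -> : (1 - r + q) = 2 * (1 - r) - e by rewrite /e; ring.
  have h1 : e * (2 * (1 - r) - e) <= e * (2 - e) by nra.
  apply: le_trans h1 _; nra.
have goal : m * (2 - m) / 2 <= 2 / (k + 1).
  have -> : m * (2 - m) / 2 = 2 / k - 2 / k ^+ 2.
    rewrite /m; field; by rewrite gt_eqF.
  rewrite -subr_ge0.
  have -> : 2 / (k + 1) - (2 / k - 2 / k ^+ 2) = 2 / (k ^+ 2 * (k + 1)).
    field; apply/andP; split; rewrite gt_eqF //; lra.
  rewrite divr_ge0 //; apply: mulr_ge0; nra.
apply: le_trans goal; rewrite ler_pdivlMr //.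
Qed.


Lemma ler_sum_in (h : seq J) (F G : J -> R) :
  (forall c, c \in h -> F c <= G c) ->
  \sum_(c <- h) F c <= \sum_(c <- h) G c.
Proof. by move=> H; rewrite big_seq [X in _ <= X]big_seq; apply: ler_sum. Qed.

Lemma sum_prod (h : seq J) (F : J -> R) :
  \sum_(c <- h) \sum_(d <- h) F c * F d = (\sum_(c <- h) F c) ^+ 2.
Proof. by rewrite expr2 big_distrlr. Qed.

Lemma small_n (y C : R) : 0 <= C -> (forall n : nat, y <= C * (2 / (n + 2)%:R)) -> y <= 0.
Proof.
move=> C0 H; apply/ler_addgt0Pr => e e0; rewrite add0r.
have hpos : 0 <= 2 * C / e by rewrite divr_ge0 // ?mulr_ge0 // ltW.
have Hn := archi_boundP hpos.
set n := Num.Def.archi_bound _ in Hn.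
apply: le_trans (H n) _.
have k0 : 0 < (n + 2)%:R :> R by rewrite ltr0n addn2.
rewrite mulrA ler_pdivrMr //.
rewrite ltr_pdivrMr // in Hn.
rewrite natrD; nra.
Qed.

Lemma cnd_gram (h : seq J) K : gram K -> \sum_(c <- h) c.1 = 0 ->
  (forall c d, c \in h -> d \in h -> 0 <= K c d <= 1) ->
  \sum_(c <- h) \sum_(d <- h) c.1 * d.1 * Num.sqrt (1 - K c d) <= 0.
Proof.
move=> HK w0 K01.
set C := \sum_(c <- h) `|c.1|.
have C0 : 0 <= C by apply: sumr_ge0 => c _.
apply: (@small_n _ (C ^+ 2)); first exact: sqr_ge0.
move=> n.
set m := 2 / (n + 2)%:R.
have step : \sum_(c <- h) \sum_(d <- h) c.1 * d.1 * Num.sqrt (1 - K c d) <=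
  \sum_(c <- h) \sum_(d <- h) (c.1 * d.1 - c.1 * d.1 * qn n (K c d) + `|c.1| * `|d.1| * m).
  apply: ler_sum_in => c hc; apply: ler_sum_in => d hd.
  have [/andP[q0 q1] e] := @qn_err n (K c d) (K01 c d hc hd).
  set q := qn n (K c d) in q0 q1 e *.
  set s := Num.sqrt (1 - K c d) in q1 e *.
  have hn : - (c.1 * d.1) <= `|c.1| * `|d.1| by rewrite -normrM -normrN ler_norm.
  have : c.1 * d.1 * s = c.1 * d.1 - c.1 * d.1 * q - c.1 * d.1 * (1 - s - q) by ring.
  move=> ->; rewrite lerD2l.
  have ab0 : 0 <= `|c.1| * `|d.1| by rewrite mulr_ge0.
  have e0 : 0 <= 1 - s - q by rewrite subr_ge0.
  rewrite -mulNr; apply: le_trans (_ : `|c.1| * `|d.1| * (1 - s - q) <= _).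
    exact: ler_wpM2r.
  exact: ler_wpM2l.
apply: le_trans step _.
under eq_bigr => c _ do rewrite big_split /= sumrB.
rewrite big_split /= sumrB.
have -> : \sum_(c <- h) \sum_(d <- h) c.1 * d.1 = 0.
  by rewrite (sum_prod h (fun c => c.1)) w0 expr2 mulr0.
have -> : \sum_(c <- h) \sum_(d <- h) `|c.1| * `|d.1| * m = C ^+ 2 * m.
  rewrite -(sum_prod h (fun c => `|c.1|)) mulr_suml; apply: eq_bigr => c _.
  by rewrite mulr_suml.
have : 0 <= \sum_(c <- h) \sum_(d <- h) c.1 * d.1 * qn n (K c d).
  exact: (gram_psd _ h (gram_qn n _ HK)).
lra.
Qed.


Definition asq (v : pt) := \sum_(i < p) (v 0 i) ^+ 2.
Definition gip (u v : pt) := \sum_(i < p) u 0 i * v 0 i.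

Lemma enorm_sub u v : enorm (u - v) = Num.sqrt (asq u + asq v - 2 * gip u v).
Proof.
rewrite /enorm /asq /gip; congr Num.sqrt.
rewrite mulr_sumr -big_split -sumrB; apply: eq_bigr => i _; rewrite !mxE /=; ring.
Qed.

Lemma asq_ge0 u : 0 <= asq u.
Proof. by apply: sumr_ge0 => i _; apply: sqr_ge0. Qed.

Lemma D_ge0 u v : 0 <= asq u + asq v - 2 * gip u v.
Proof.
have -> : asq u + asq v - 2 * gip u v = \sum_(i < p) (u 0 i - v 0 i) ^+ 2.
  rewrite /asq /gip mulr_sumr -big_split -sumrB; apply: eq_bigr => i _ /=; ring.
by apply: sumr_ge0 => i _; apply: sqr_ge0.
Qed.

Lemma gip_lb u v : 0 <= asq u + asq v + 2 * gip u v.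
Proof.
have -> : asq u + asq v + 2 * gip u v = \sum_(i < p) (u 0 i + v 0 i) ^+ 2.
  rewrite /asq /gip mulr_sumr -!big_split; apply: eq_bigr => i _ /=; ring.
by apply: sumr_ge0 => i _; apply: sqr_ge0.
Qed.

Lemma cnd (h : seq J) : \sum_(c <- h) c.1 = 0 ->
  \sum_(c <- h) \sum_(d <- h) c.1 * d.1 * enorm (c.2 - d.2) <= 0.
Proof.
move=> w0.
set S := \sum_(c <- h) _.
set C := \sum_(c <- h) `|c.1|.
have C0 : 0 <= C by apply: sumr_ge0 => c _.
set A := 1 + \sum_(c <- h) asq c.2.
have aA : forall c, c \in h -> asq c.2 <= A.
  move=> c hc; rewrite /A (big_rem c hc) /=.
  have : 0 <= \sum_(y <- rem c h) asq y.2 by apply: sumr_ge0 => y _; apply: asq_ge0.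
  lra.
have A1 : 1 <= A.
  have : 0 <= \sum_(c <- h) asq c.2 by apply: sumr_ge0 => y _; apply: asq_ge0.
  rewrite /A; lra.
have key : forall t, 8 * A + 1 <= t -> S <= C ^+ 2 * (A / t).
  move=> t Ht.
  have t0 : 0 < t by lra.
  have tA : 8 * A <= t ^+ 2 by nra.
  pose hh (c : J) := Num.sqrt (t ^+ 2 - asq c.2).
  have hh2 : forall c, c \in h -> hh c ^+ 2 = t ^+ 2 - asq c.2.
    move=> c hc; rewrite sqr_sqrtr // subr_ge0; have := aA c hc; nra.
  have hh0 : forall c, 0 <= hh c by move=> c; apply: sqrtr_ge0.
  have hhge : forall c, c \in h -> t / 2 <= hh c.
    move=> c hc; have h0 : 0 <= t / 2 by lra.
    rewrite -(ger0_norm h0) -sqrtr_sqr ler_sqrt.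
      have := aA c hc; have := asq_ge0 c.2; nra.
    have := aA c hc; nra.
  pose x (c d : J) := (gip c.2 d.2 + hh c * hh d) / t ^+ 2.
  have gx : gram x.
    apply: (@gram_ext (fun j k => (t ^+ 2)^-1 *
       (\sum_(i < p) (fun i (c : J) => c.2 0 i) i j * (fun i (c : J) => c.2 0 i) i k
        + hh j * hh k))).
      by move=> j k; rewrite /x mulrC.
    apply: gram_scale; first by rewrite invr_ge0 sqr_ge0.
    apply: gram_add; [exact: gram_sumI | exact: gram_feat].
  have t2 : 0 < t ^+ 2 by apply: exprn_gt0.
  have ident : forall c d, c \in h -> d \in h ->
      asq c.2 + asq d.2 - 2 * gip c.2 d.2 + (hh c - hh d) ^+ 2
      = 2 * t ^+ 2 * (1 - x c d).
    move=> c d hc hd; rewrite sqrrB (hh2 c hc) (hh2 d hd) /x.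
    field; by rewrite gt_eqF.
  have x01 : forall c d, c \in h -> d \in h -> 0 <= x c d <= 1.
    move=> c d hc hd; apply/andP; split.
      rewrite /x divr_ge0 ?ltW //.
      have := gip_lb c.2 d.2; have := aA c hc; have := aA d hd.
      have := hhge c hc; have := hhge d hd; nra.
    have := ident c d hc hd; have := D_ge0 c.2 d.2; have := sqr_ge0 (hh c - hh d).
    move=> q1 q2 q3.
    have : 0 <= 2 * t ^+ 2 * (1 - x c d) by rewrite -q3; lra.
    rewrite pmulr_rge0 ?subr_ge0 //; lra.
  have Y := cnd_gram h _ gx w0 x01.
  set eta := A / t.
  have eta0 : 0 <= eta by rewrite /eta divr_ge0 // ?ltW //; lra.
  have pw : forall c d, c \in h -> d \in h ->
      c.1 * d.1 * enorm (c.2 - d.2) <=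
      Num.sqrt (2 * t ^+ 2) * (c.1 * d.1 * Num.sqrt (1 - x c d)) + `|c.1| * `|d.1| * eta.
    move=> c d hc hd.
    rewrite enorm_sub.
    set D := asq c.2 + asq d.2 - 2 * gip c.2 d.2.
    set dl := hh c - hh d.
    have D0 : 0 <= D by apply: D_ge0.
    have E : Num.sqrt (2 * t ^+ 2) * Num.sqrt (1 - x c d) = Num.sqrt (D + dl ^+ 2).
      rewrite -sqrtrM; last by rewrite mulr_ge0 // ltW.
      by rewrite ident.
    have dl2 : dl ^+ 2 <= eta ^+ 2.
      have e1 : dl * (hh c + hh d) = asq d.2 - asq c.2.
        rewrite /dl; have := hh2 c hc; have := hh2 d hd; move=> q1 q2.
        have -> : (hh c - hh d) * (hh c + hh d) = hh c ^+ 2 - hh d ^+ 2 by ring.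
        rewrite q1 q2; ring.
      have s1 : t <= hh c + hh d by have := hhge c hc; have := hhge d hd; lra.
      have s2 : (asq d.2 - asq c.2) ^+ 2 <= A ^+ 2.
        have := aA c hc; have := aA d hd; have := asq_ge0 c.2; have := asq_ge0 d.2; nra.
      have s3 : dl ^+ 2 * t ^+ 2 <= A ^+ 2.
        apply: le_trans s2; rewrite -e1 exprMn; apply: ler_wpM2l; first exact: sqr_ge0.
        nra.
      have -> : eta ^+ 2 = A ^+ 2 / t ^+ 2 by rewrite /eta exprMn exprVn.
      by rewrite ler_pdivlMr.
    have sD2 : Num.sqrt D ^+ 2 = D by rewrite sqr_sqrtr.
    have sD0 : 0 <= Num.sqrt D by apply: sqrtr_ge0.
    have up : Num.sqrt (D + dl ^+ 2) <= Num.sqrt D + eta.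
      have h0 : 0 <= Num.sqrt D + eta by lra.
      rewrite -(ger0_norm h0) -sqrtr_sqr ler_sqrt; last exact: sqr_ge0.
      have : 0 <= Num.sqrt D * eta by apply: mulr_ge0.
      nra.
    have lo : Num.sqrt D <= Num.sqrt (D + dl ^+ 2).
      rewrite ler_sqrt; last by rewrite addr_ge0 // sqr_ge0.
      have := sqr_ge0 dl; lra.
    rewrite mulrCA E.
    set Dl := Num.sqrt (D + dl ^+ 2) - Num.sqrt D.
    have Dl0 : 0 <= Dl by rewrite /Dl subr_ge0.
    have Dle : Dl <= eta by rewrite /Dl; lra.
    have -> : c.1 * d.1 * Num.sqrt D = c.1 * d.1 * Num.sqrt (D + dl ^+ 2) - c.1 * d.1 * Dl.
      by rewrite /Dl; ring.
    rewrite lerD2l.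
    have hn : - (c.1 * d.1) <= `|c.1| * `|d.1| by rewrite -normrM -normrN ler_norm.
    have ab0 : 0 <= `|c.1| * `|d.1| by rewrite mulr_ge0.
    rewrite -mulNr; apply: le_trans (_ : `|c.1| * `|d.1| * Dl <= _).
      exact: ler_wpM2r.
    exact: ler_wpM2l.
  apply: le_trans (_ : \sum_(c <- h) \sum_(d <- h)
      (Num.sqrt (2 * t ^+ 2) * (c.1 * d.1 * Num.sqrt (1 - x c d)) + `|c.1| * `|d.1| * eta) <= _).
    by apply: ler_sum_in => c hc; apply: ler_sum_in => d hd; apply: pw.
  under eq_bigr => c _ do rewrite big_split /=.
  rewrite big_split /=.
  have -> : \sum_(c <- h) \sum_(d <- h) `|c.1| * `|d.1| * eta = C ^+ 2 * eta.
    rewrite -(sum_prod h (fun c => `|c.1|)) mulr_suml; apply: eq_bigr => c _.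
    by rewrite mulr_suml.
  have -> : \sum_(c <- h) \sum_(d <- h) Num.sqrt (2 * t ^+ 2) * (c.1 * d.1 * Num.sqrt (1 - x c d))
     = Num.sqrt (2 * t ^+ 2) * \sum_(c <- h) \sum_(d <- h) c.1 * d.1 * Num.sqrt (1 - x c d).
    rewrite mulr_sumr; apply: eq_bigr => c _; by rewrite mulr_sumr.
  have : Num.sqrt (2 * t ^+ 2) * \sum_(c <- h) \sum_(d <- h) c.1 * d.1 * Num.sqrt (1 - x c d) <= 0.
    by rewrite mulr_ge0_le0 // sqrtr_ge0.
  lra.
apply/ler_addgt0Pr => e e0; rewrite add0r.
have q0 : 0 <= C ^+ 2 * A / e by apply: divr_ge0; [apply: mulr_ge0; [exact: sqr_ge0 | lra] | exact: ltW].
set t := 8 * A + 1 + C ^+ 2 * A / e.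
have tp : 0 < t by rewrite /t; lra.
apply: le_trans (key t _) _; first by rewrite /t; lra.
rewrite mulrA ler_pdivrMr //.
have : e * (C ^+ 2 * A / e) = C ^+ 2 * A by field; rewrite gt_eqF.
rewrite /t; nra.
Qed.


Definition ipK (K : pt -> pt -> R) (h g : seq J) :=
  \sum_(c <- h) \sum_(d <- g) c.1 * d.1 * K c.2 d.2.

Lemma ipK_split (F G : pt -> R) (H : pt -> pt -> R) A B :
  ipK (fun u v => F u + G v - H u v) A B =
  (\sum_(a <- A) a.1 * F a.2) * (\sum_(b <- B) b.1) +
  (\sum_(a <- A) a.1) * (\sum_(b <- B) b.1 * G b.2) - ipK H A B.
Proof.
rewrite /ipK !big_distrlr -big_split -sumrB; apply: eq_bigr => a _.
rewrite -big_split -sumrB; apply: eq_bigr => b _ /=; ring.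
Qed.

Lemma ipK_catl K h1 h2 g : ipK K (h1 ++ h2) g = ipK K h1 g + ipK K h2 g.
Proof. by rewrite /ipK big_cat. Qed.

Lemma ipK_catr K h g1 g2 : ipK K h (g1 ++ g2) = ipK K h g1 + ipK K h g2.
Proof. by rewrite /ipK -big_split; apply: eq_bigr => c _; rewrite big_cat. Qed.

Lemma ipK_mapl K (s : R) h g :
  ipK K [seq (s * d.1, d.2) | d <- h] g = s * ipK K h g.
Proof.
rewrite /ipK big_map mulr_sumr; apply: eq_bigr => c _.
rewrite mulr_sumr; apply: eq_bigr => d _ /=; ring.
Qed.

Lemma ipK_mapr K (s : R) h g :
  ipK K h [seq (s * d.1, d.2) | d <- g] = s * ipK K h g.
Proof.
rewrite /ipK mulr_sumr; apply: eq_bigr => c _.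
rewrite big_map mulr_sumr; apply: eq_bigr => d _ /=; ring.
Qed.

Lemma ipK_sym K h g : (forall u v, K u v = K v u) -> ipK K h g = ipK K g h.
Proof.
move=> HK; rewrite /ipK exchange_big; apply: eq_bigr => c _.
by apply: eq_bigr => d _; rewrite [K d.2 c.2]HK [d.1 * c.1]mulrC.
Qed.

Lemma enormN (v : pt) : enorm (- v) = enorm v.
Proof. by rewrite /enorm; congr Num.sqrt; apply: eq_bigr => i _; rewrite mxE sqrrN. Qed.

Lemma enorm0 : enorm (0 : pt) = 0.
Proof.
rewrite /enorm big1 ?sqrtr0 // => i _; by rewrite mxE expr0n.
Qed.

Lemma enormB (u v : pt) : enorm (u - v) = enorm (v - u).
Proof. by rewrite -opprB enormN. Qed.

Lemma kE_sym (u v : pt) : kE u v = kE v u.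
Proof. by rewrite /kE enormB; ring. Qed.

Lemma pre_ip_ipK (h g : seq J) : pre_ip h g = ipK (@kE R p) h g.
Proof. by []. Qed.

Lemma pre_ip_split (h g : seq J) : pre_ip h g =
  (\sum_(a <- h) a.1 * enorm a.2) * (\sum_(b <- g) b.1) +
  (\sum_(a <- h) a.1) * (\sum_(b <- g) b.1 * enorm b.2) -
  ipK (fun u v => enorm (u - v)) h g.
Proof. exact: (ipK_split (@enorm R p) (@enorm R p) (fun u v => enorm (u - v)) h g). Qed.

Lemma pre_ip_ge0 (h : seq J) : 0 <= pre_ip h h.
Proof.
set w := \sum_(c <- h) c.1.
set m := \sum_(c <- h) c.1 * enorm c.2.
have H := cnd ((- w, 0) :: h).
have E : \sum_(c <- (- w, 0) :: h) \sum_(d <- (- w, 0) :: h) c.1 * d.1 * enorm (c.2 - d.2)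
         = - (2 * w * m) + ipK (fun u v => enorm (u - v)) h h.
  rewrite big_cons /= big_cons /= subrr enorm0 mulr0 add0r.
  under [X in _ + X = _]eq_bigr => c _ do rewrite big_cons /= subr0.
  rewrite big_split /=.
  have -> : \sum_(j <- h) - w * j.1 * enorm (0 - j.2) = - w * m.
    rewrite /m mulr_sumr; apply: eq_bigr => j _; rewrite sub0r enormN; ring.
  have -> : \sum_(i <- h) i.1 * - w * enorm i.2 = - w * m.
    rewrite /m mulr_sumr; apply: eq_bigr => j _; ring.
  rewrite /ipK; ring.
rewrite E in H.
have : - (2 * w * m) + ipK (fun u v => enorm (u - v)) h h <= 0.
  apply: H; rewrite big_cons /=; rewrite -/w; ring.
rewrite pre_ip_split -/w -/m; lra.
Qed.

Lemma quad_cs (P B G : R) : 0 <= G -> (forall t, 0 <= P + 2 * t * B + t ^+ 2 * G) ->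
  B ^+ 2 <= P * G.
Proof.
move=> G0 H.
have [Gz|Gp] := eqVneq G 0.
  rewrite Gz mulr0.
  have [Bz|Bn] := eqVneq B 0; first by rewrite Bz expr0n.
  have := H (- (P + 1) / (2 * B)); rewrite Gz mulr0 addr0.
  have -> : 2 * (- (P + 1) / (2 * B)) * B = - (P + 1) by field; rewrite Bn.
  lra.
have Gpos : 0 < G by rewrite lt_def Gp G0.
have := H (- B / G).
have -> : P + 2 * (- B / G) * B + (- B / G) ^+ 2 * G = P - B ^+ 2 / G.
  by field.
rewrite subr_ge0 ler_pdivrMr //.
Qed.

Lemma pre_cs (h g : seq J) : pre_ip h g ^+ 2 <= pre_ip h h * pre_ip g g.
Proof.
apply: quad_cs; first exact: pre_ip_ge0.
move=> t.
have := pre_ip_ge0 (h ++ [seq (t * d.1, d.2) | d <- g]).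
rewrite !pre_ip_ipK ipK_catl !ipK_catr !ipK_mapl !ipK_mapr.
rewrite (ipK_sym _ g h kE_sym) -!pre_ip_ipK.
have -> : pre_ip h h + t * pre_ip h g + (t * pre_ip h g + t * (t * pre_ip g g)) =
  pre_ip h h + 2 * t * pre_ip h g + t ^+ 2 * pre_ip g g by ring.
by [].
Qed.


Lemma energy_pre (A B : seq J) : \sum_(a <- A) a.1 = 1 -> \sum_(b <- B) b.1 = 1 ->
  energy_dist A B = pre_ip (pre_sub A B) (pre_sub A B).
Proof.
move=> wA wB.
have -> : pre_sub A B = A ++ [seq ((-1) * d.1, d.2) | d <- B].
  by rewrite /pre_sub; congr (_ ++ _); apply: eq_map => d; rewrite mulN1r.
rewrite !pre_ip_ipK ipK_catl !ipK_catr !ipK_mapl !ipK_mapr -!pre_ip_ipK.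
rewrite !pre_ip_split wA wB /energy_dist /Eabs.
rewrite -/(ipK (fun u v => enorm (u - v)) A B) -/(ipK (fun u v => enorm (u - v)) A A).
rewrite -/(ipK (fun u v => enorm (u - v)) B B).
rewrite (ipK_sym _ B A (fun u v => enormB u v)).
ring.
Qed.

Lemma lin_cvg (g : seq J) (v : nat -> pt -> R) (f : pt -> R) :
  (forall y, (fun m => v m y) @ \oo --> f y) ->
  (fun m => \sum_(c <- g) c.1 * v m c.2) @ \oo --> \sum_(c <- g) c.1 * f c.2.
Proof.
move=> H; elim: g => [|c g IH].
  rewrite big_nil; under eq_cvg do rewrite big_nil; exact: cvg_cst.
rewrite big_cons; under eq_cvg do rewrite big_cons.
apply: cvgD => //; apply: cvgMl_tmp; exact: H.
Qed.

End Aux.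

Theorem proposition1 (R : realType) (p N n : nat) (x : 'I_N -> 'rV[R]_p)
    (f : 'rV[R]_p -> R) (normf : R) (P : {set 'I_N} -> R) :
  (0 < n)%N ->
  rkhs_norm_is f normf ->
  (forall s, 0 <= P s) ->
  \sum_(s : {set 'I_N}) P s = 1 ->
  (forall s, P s != 0 -> #|s| = n) ->
  \sum_(s : {set 'I_N})
      P s * (N%:R / n%:R * \sum_(i in s) f (x i) - \sum_(i < N) f (x i)) ^+ 2
  <= N%:R ^+ 2 * normf ^+ 2 *
     \sum_(s : {set 'I_N}) P s * energy_dist (empirical x s) (empirical x [set: 'I_N]).
Proof.
move=> n0 [u [_ [Hf Hn]]] P0 P1 Pn.
rewrite mulr_sumr; apply: ler_sum => s _.
have [Ps|Ps] := eqVneq (P s) 0; first by rewrite Ps !mul0r mulr0.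
have cs := Pn s Ps.
have N0 : (0 < N)%N.
  have := max_card s; rewrite card_ord cs => H; exact: leq_trans n0 H.
have nR : n%:R != 0 :> R by rewrite pnatr_eq0 -lt0n.
have NR : N%:R != 0 :> R by rewrite pnatr_eq0 -lt0n.
set g := pre_sub (empirical x s) (empirical x [set: 'I_N]).
set L := \sum_(c <- g) c.1 * f c.2.
have wS : \sum_(a <- empirical x s) a.1 = 1.
  rewrite /empirical big_map /= big_enum /= sumr_const -(mulr_natr (#|s|%:R^-1)) mulVf ?cs //.
have wU : \sum_(a <- empirical x [set: 'I_N]) a.1 = 1.
  rewrite /empirical big_map /= big_enum /= sumr_const -(mulr_natr (#|[set: 'I_N]|%:R^-1)) mulVf ?cardsT ?card_ord //.
have Eeq := @energy_pre R p _ _ wS wU.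
have Leq : N%:R / n%:R * \sum_(i in s) f (x i) - \sum_(i < N) f (x i) = N%:R * L.
  rewrite /L /g /pre_sub big_cat /= /empirical !big_map /= !big_enum /=.
  rewrite cardsT card_ord cs.
  have -> : \sum_(i in [set: 'I_N]) - N%:R^-1 * f (x i) = - N%:R^-1 * \sum_(i < N) f (x i).
    rewrite mulr_sumr; apply: eq_bigl => i; by rewrite inE.
  rewrite -mulr_sumr; field; by rewrite nR NR.
have key : L ^+ 2 <= normf ^+ 2 * pre_ip g g.
  pose a m := \sum_(c <- g) c.1 * pre_eval (u m) c.2.
  have ha : (a m @[m --> \oo] --> L)%classic by apply: (@lin_cvg R p g (fun m => pre_eval (u m)) f).
  pose b m := Num.sqrt (pre_ip (u m) (u m)).
  have ineq : forall m, a m * a m <= b m * b m * pre_ip g g.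
    move=> m; rewrite -!expr2 /b sqr_sqrtr ?pre_ip_ge0 //.
    have -> : a m = pre_ip (u m) g.
      rewrite /a /pre_ip /pre_eval exchange_big; apply: eq_bigr => c _.
      rewrite mulr_sumr; apply: eq_bigr => d _; ring.
    exact: pre_cs.
  have c1 : ((fun m => a m * a m) @ \oo --> L * L)%classic by apply: cvgM.
  have c2 : ((fun m => b m * b m * pre_ip g g) @ \oo --> normf * normf * pre_ip g g)%classic.
    by apply: cvgMr_tmp; apply: cvgM.
  rewrite !expr2; apply: (ler_cvg_to c1 c2); exact: nearW.
rewrite Leq Eeq exprMn.
have -> : P s * (N%:R ^+ 2 * L ^+ 2) = (P s * N%:R ^+ 2) * L ^+ 2 by ring.
have -> : N%:R ^+ 2 * normf ^+ 2 * (P s * pre_ip g g) =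
          (P s * N%:R ^+ 2) * (normf ^+ 2 * pre_ip g g) by ring.
apply: ler_wpM2l => //; apply: mulr_ge0 => //; exact: sqr_ge0.
Qed.
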